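(* Away from characteristic points of a regular surface $\Sigma\subset\mathbb{M}$, the mean curvature $\mathcal H_{\nabla^{1,\alpha},L}:=\mathrm{tr}\,II^{\nabla^{1,\alpha},L}$ satisfies $$\mathcal H_{\nabla^{1,\alpha},\infty}:=\lim_{L\to+\infty}\mathcal H_{\nabla^{1,\alpha},L}=X_1(\bar p)+X_2(\bar q)-(1-\alpha)\bar p.$$
   Context: The affine group $\mathbb{M}$ is modeled on $\{(x_1,x_2,x_3)\in\mathbb{R}^3: x_1>0\}$ with product $(m,n,s)\star(\lambda,\mu,\nu)=(m\lambda,m\mu+n,\nu+s)$. Put $X_1=x_1\partial_{x_1}$, $X_2=x_1\partial_{x_2}+\partial_{x_3}$, $X_3=x_1\partial_{x_2}$, with dual coframe $\omega_1=\frac1{x_1}dx_1$, $\omega_2=dx_3$, $\omega=\frac1{x_1}dx_2-dx_3$. For a constant $L>0$, $g_L=\omega_1\otimes\omega_1+\omega_2\otimes\omega_2+L\,\omega\otimes\omega$, so $X_1,X_2,\widetilde X_3:=L^{-1/2}X_3$ is $g_L$-orthonormal; $\langle\cdot,\cdot\rangle_L$ denotes $g_L$, and $\nabla$ is the Levi-Civita connection of $g_L$. Let $H_1=\mathrm{span}\{X_1,X_2\}$, and let $P^1$, $P^{1,\perp}$ be the $g_L$-orthogonal projections onto $H_1$ and onto $H_1^\perp=\mathrm{span}\{X_3\}$. For a real constant $\alpha$, the first kind of deformed Schouten–Van Kampen connection is $\nabla^{1,\alpha}_XY=(1-\alpha)\nabla_XY+\alpha P^1\nabla_X(P^1Y)+\alpha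 P^{1,\perp}\nabla_X(P^{1,\perp}Y)$. A regular surface is a Euclidean $C^2$-smooth compact oriented surface $\Sigma=\{u=0\}$ with $u$ Euclidean $C^2$ and with nonvanishing Euclidean gradient. $\nabla_Hu=X_1(u)X_1+X_2(u)X_2$; a point of $\Sigma$ is characteristic if $\nabla_Hu=0$. Put $p=X_1u$, $q=X_2u$, $r=\widetilde X_3u$, $l=\sqrt{p^2+q^2}$, $l_L=\sqrt{p^2+q^2+r^2}$, $\bar p=p/l$, $\bar q=q/l$, $\bar p_L=p/l_L$, $\bar q_L=q/l_L$, $\bar r_L=r/l_L$; $v_L=\bar p_LX_1+\bar q_LX_2+\bar r_L\widetilde X_3$, $e_1=\bar qX_1-\bar pX_2$, $e_2=\bar r_L\bar pX_1+\bar r_L\bar qX_2-\frac{l}{l_L}\widetilde X_3$. The second fundamental form is $II^{\nabla^{1,\alpha},L}=(\langle\nabla^{1,\alpha}_{e_i}v_L,e_j\rangle_L)_{i,j=1,2}$. *)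

(* Defs.v *)
From Stdlib Require Import Reals List.
From Coquelicot Require Import Coquelicot.
Open Scope R_scope.

(* Real functions on R^3 = coordinates (x1,x2,x3); the affine group M is the
   open half-space {x1 > 0}. *)
Definition fn3 := R -> R -> R -> R.
Definition inM (x1 x2 x3 : R) : Prop := 0 < x1.

Inductive idx := i1 | i2 | i3.
Definition sum3 (F : idx -> R) : R := F i1 + F i2 + F i3.

Definition d1 (f : fn3) : fn3 := fun x1 x2 x3 => Derive (fun t => f t x2 x3) x1.
Definition d2 (f : fn3) : fn3 := fun x1 x2 x3 => Derive (fun t => f x1 t x3) x2.
Definition d3 (f : fn3) : fn3 := fun x1 x2 x3 => Derive (fun t => f x1 x2 t) x3.
Definition dcoord (k : idx) (f : fn3) : fn3 :=
  match k with i1 => d1 f | i2 => d2 f | i3 => d3 f end.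

Definition X1 (f : fn3) : fn3 := fun x1 x2 x3 => x1 * d1 f x1 x2 x3.
Definition X2 (f : fn3) : fn3 := fun x1 x2 x3 => x1 * d2 f x1 x2 x3 + d3 f x1 x2 x3.
Definition X3 (f : fn3) : fn3 := fun x1 x2 x3 => x1 * d2 f x1 x2 x3.
Definition Xt3 (L : R) (f : fn3) : fn3 := fun x1 x2 x3 => / sqrt L * X3 f x1 x2 x3.

(* The g_L-orthonormal frame E_1 = X1, E_2 = X2, E_3 = X~3, as derivations. *)
Definition Edir (L : R) (i : idx) (f : fn3) : fn3 :=
  match i with i1 => X1 f | i2 => X2 f | i3 => Xt3 L f end.

(* Euclidean coordinate components of the frame fields
   (component m along d/dx_m). *)
Definition Ecoord (L : R) (i m : idx) : fn3 := fun x1 x2 x3 =>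
  match i, m with
  | i1, i1 => x1
  | i2, i2 => x1
  | i2, i3 => 1
  | i3, i2 => / sqrt L * x1
  | _, _ => 0
  end.

(* Coordinate components of the dual coframe omega_1, omega_2, sqrt(L) omega
   (dual to X1, X2, X~3):  omega_1 = dx1/x1, omega_2 = dx3,
   omega = dx2/x1 - dx3. *)
Definition theta (L : R) (k m : idx) : fn3 := fun x1 x2 x3 =>
  match k, m with
  | i1, i1 => / x1
  | i2, i3 => 1
  | i3, i2 => sqrt L / x1
  | i3, i3 => - sqrt L
  | _, _ => 0
  end.

(* Euclidean coordinate components of the Lie bracket [E_i, E_j]. *)
Definition brc (L : R) (i j m : idx) : fn3 := fun x1 x2 x3 =>
  sum3 (fun l => Ecoord L i l x1 x2 x3 * dcoord l (Ecoord L j m) x1 x2 x3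
               - Ecoord L j l x1 x2 x3 * dcoord l (Ecoord L i m) x1 x2 x3).

(* Structure functions: [E_i, E_j] = sum_k cst L i j k E_k. *)
Definition cst (L : R) (i j k : idx) : fn3 := fun x1 x2 x3 =>
  sum3 (fun m => theta L k m x1 x2 x3 * brc L i j m x1 x2 x3).

(* Levi-Civita connection of g_L on the orthonormal frame, by the Koszul
   formula: g_L(nabla_{E_i} E_j, E_k)
     = 1/2 ( g([E_i,E_j],E_k) - g([E_j,E_k],E_i) + g([E_k,E_i],E_j) ). *)
Definition Gamma (L : R) (i j k : idx) : fn3 := fun x1 x2 x3 =>
  / 2 * (cst L i j k x1 x2 x3 - cst L j k i x1 x2 x3 + cst L k i j x1 x2 x3).

(* A vector field, given by its components in the frame (X1, X2, X~3). *)
Definition vf := idx -> fn3.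

Definition LC (L : R) (X Y : vf) : vf := fun k x1 x2 x3 =>
  sum3 (fun i => X i x1 x2 x3 * Edir L i (Y k) x1 x2 x3)
  + sum3 (fun i => sum3 (fun j => X i x1 x2 x3 * Y j x1 x2 x3 * Gamma L i j k x1 x2 x3)).

Definition P1 (Y : vf) : vf := fun k =>
  match k with i3 => fun _ _ _ => 0 | _ => Y k end.
Definition P1perp (Y : vf) : vf := fun k =>
  match k with i3 => Y k | _ => fun _ _ _ => 0 end.

Definition nabla1 (L alpha : R) (X Y : vf) : vf := fun k x1 x2 x3 =>
  (1 - alpha) * LC L X Y k x1 x2 x3
  + alpha * P1 (LC L X (P1 Y)) k x1 x2 x3
  + alpha * P1perp (LC L X (P1perp Y)) k x1 x2 x3.

(* The metric g_L (the frame is g_L-orthonormal). *)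
Definition gL (X Y : vf) : fn3 := fun x1 x2 x3 =>
  sum3 (fun k => X k x1 x2 x3 * Y k x1 x2 x3).

Section Quantities.
Variables (L : R) (u : fn3).
Definition pp : fn3 := X1 u.
Definition qq : fn3 := X2 u.
Definition rr : fn3 := Xt3 L u.
Definition ll : fn3 := fun x1 x2 x3 => sqrt (pp x1 x2 x3 ^ 2 + qq x1 x2 x3 ^ 2).
Definition lL : fn3 := fun x1 x2 x3 =>
  sqrt (pp x1 x2 x3 ^ 2 + qq x1 x2 x3 ^ 2 + rr x1 x2 x3 ^ 2).
Definition pbar : fn3 := fun x1 x2 x3 => pp x1 x2 x3 / ll x1 x2 x3.
Definition qbar : fn3 := fun x1 x2 x3 => qq x1 x2 x3 / ll x1 x2 x3.
Definition pbarL : fn3 := fun x1 x2 x3 => pp x1 x2 x3 / lL x1 x2 x3.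
Definition qbarL : fn3 := fun x1 x2 x3 => qq x1 x2 x3 / lL x1 x2 x3.
Definition rbarL : fn3 := fun x1 x2 x3 => rr x1 x2 x3 / lL x1 x2 x3.
Definition vL : vf := fun k => match k with i1 => pbarL | i2 => qbarL | i3 => rbarL end.
Definition e1 : vf := fun k => match k with
  | i1 => qbar | i2 => fun x1 x2 x3 => - pbar x1 x2 x3 | i3 => fun _ _ _ => 0 end.
Definition e2 : vf := fun k => match k with
  | i1 => fun x1 x2 x3 => rbarL x1 x2 x3 * pbar x1 x2 x3
  | i2 => fun x1 x2 x3 => rbarL x1 x2 x3 * qbar x1 x2 x3
  | i3 => fun x1 x2 x3 => - (ll x1 x2 x3 / lL x1 x2 x3) end.
End Quantities.

Definition e_ (L : R) (u : fn3) (i : nat) : vf :=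
  match i with 1%nat => e1 u | _ => e2 L u end.

Definition II (L alpha : R) (u : fn3) (i j : nat) : fn3 :=
  gL (nabla1 L alpha (e_ L u i) (vL L u)) (e_ L u j).

Definition Hmean (L alpha : R) (u : fn3) : fn3 := fun x1 x2 x3 =>
  II L alpha u 1 1 x1 x2 x3 + II L alpha u 2 2 x1 x2 x3.

Definition cont3_at (f : fn3) (x1 x2 x3 : R) : Prop :=
  forall eps, 0 < eps -> exists delta, 0 < delta /\
    forall y1 y2 y3, Rabs (y1 - x1) < delta -> Rabs (y2 - x2) < delta ->
      Rabs (y3 - x3) < delta -> Rabs (f y1 y2 y3 - f x1 x2 x3) < eps.

Definition has_partials (f : fn3) (x1 x2 x3 : R) : Prop :=
  ex_derive (fun t => f t x2 x3) x1 /\ ex_derive (fun t => f x1 t x3) x2 /\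
  ex_derive (fun t => f x1 x2 t) x3.

Definition C2_on_M (u : fn3) : Prop :=
  forall x1 x2 x3, inM x1 x2 x3 ->
    cont3_at u x1 x2 x3 /\ has_partials u x1 x2 x3 /\
    (forall k, cont3_at (dcoord k u) x1 x2 x3 /\ has_partials (dcoord k u) x1 x2 x3) /\
    (forall k l, cont3_at (dcoord l (dcoord k u)) x1 x2 x3).

Definition open3 (O : R -> R -> R -> Prop) : Prop :=
  forall x1 x2 x3, O x1 x2 x3 -> exists delta, 0 < delta /\
    forall y1 y2 y3, Rabs (y1 - x1) < delta -> Rabs (y2 - x2) < delta ->
      Rabs (y3 - x3) < delta -> O y1 y2 y3.

Definition compact3 (S : R -> R -> R -> Prop) : Prop :=
  forall (I : Type) (O : I -> R -> R -> R -> Prop),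
    (forall i, open3 (O i)) ->
    (forall x1 x2 x3, S x1 x2 x3 -> exists i, O i x1 x2 x3) ->
    exists l : list I, forall x1 x2 x3, S x1 x2 x3 ->
      exists i, In i l /\ O i x1 x2 x3.

Definition Sigma (u : fn3) (x1 x2 x3 : R) : Prop := inM x1 x2 x3 /\ u x1 x2 x3 = 0.

(* Sigma = {u = 0} is a regular surface: u Euclidean C^2, nonvanishing
   Euclidean gradient on Sigma, Sigma compact (orientation is induced by u). *)
Definition regular_surface (u : fn3) : Prop :=
  C2_on_M u /\
  (forall x1 x2 x3, Sigma u x1 x2 x3 ->
     ~ (d1 u x1 x2 x3 = 0 /\ d2 u x1 x2 x3 = 0 /\ d3 u x1 x2 x3 = 0)) /\
  compact3 (Sigma u).

Definition characteristic (u : fn3) (x1 x2 x3 : R) : Prop :=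
  X1 u x1 x2 x3 = 0 /\ X2 u x1 x2 x3 = 0.

(* Main.v *)
Require Import Defs.
From Stdlib Require Import Reals Lra.
From Coquelicot Require Import Coquelicot.
Open Scope R_scope.

Definition Gv (c : R) (i j k : idx) : R :=
  match i, j, k with
  | i1, i2, i3 => c / 2 | i1, i3, i2 => - (c / 2)
  | i2, i1, i3 => - (c / 2) | i2, i3, i1 => c / 2
  | i3, i1, i2 => - (c / 2) | i3, i2, i1 => c / 2
  | i3, i1, i3 => -1 | i3, i3, i1 => 1
  | _, _, _ => 0 end.

Lemma Derive_id' (x : R) : Derive (fun t => t) x = 1.
Proof. apply Derive_id. Qed.
Lemma Derive_lin (a x : R) : Derive (fun t => a * t) x = a.
Proof. rewrite Derive_scal. rewrite (Derive_id' x). ring. Qed.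


Lemma Gamma_val L i j k x1 x2 x3 : 0 < L -> x1 <> 0 ->
  Gamma L i j k x1 x2 x3 = Gv (sqrt L) i j k.
Proof.
  intros HL Hx. assert (Hs : sqrt L <> 0) by (apply Rgt_not_eq, sqrt_lt_R0; lra).
  destruct i, j, k; unfold Gamma, cst, brc, sum3, theta, Ecoord, dcoord, Defs.d1, Defs.d2, Defs.d3; cbv beta iota;
  rewrite ?Derive_const, ?Derive_id', ?Derive_lin; unfold Gv; try (field; auto).
Qed.

Lemma X1_0 a b c : X1 (fun _ _ _ => 0) a b c = 0.
Proof. unfold X1, Defs.d1. rewrite Derive_const. ring. Qed.
Lemma X2_0 a b c : X2 (fun _ _ _ => 0) a b c = 0.
Proof. unfold X2, Defs.d2, Defs.d3. rewrite !Derive_const. ring. Qed.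
Lemma Xt3_0 L a b c : Xt3 L (fun _ _ _ => 0) a b c = 0.
Proof. unfold Xt3, X3, Defs.d2. rewrite !Derive_const. ring. Qed.


Section FF.
Variables (x1 alpha p q s : R) (dP dQ dR : idx -> R) (k : R).
Definition lF := sqrt (p ^ 2 + q ^ 2).
Definition lamF := sqrt (p ^ 2 + q ^ 2 + (k * s) ^ 2).
Definition pbF := p / lF.
Definition qbF := q / lF.
Definition PF := p / lamF.
Definition QF := q / lamF.
Definition RF := k * s / lamF.
Definition aF := RF * pbF.
Definition bF := RF * qbF.
Definition dF := - (lF / lamF).
Definition V1 (D : idx -> R) := x1 * D i1.
Definition V2 (D : idx -> R) := x1 * D i2 + D i3.
Definition V3 (D : idx -> R) := k * (x1 * D i2).
Definition e1F D := qbF * V1 D - pbF * V2 D.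
Definition e2F D := aF * V1 D + bF * V2 D + dF * V3 D.
Definition FF := qbF * e1F dP - pbF * e1F dQ + aF * e2F dP + bF * e2F dQ + dF * e2F dR
  + (1 - alpha) * (aF * dF * RF - dF * dF * PF).
End FF.


Lemma X1_e f a b c : X1 f a b c = a * Defs.d1 f a b c. Proof. reflexivity. Qed.
Lemma X2_e f a b c : X2 f a b c = a * Defs.d2 f a b c + Defs.d3 f a b c. Proof. reflexivity. Qed.
Lemma Xt3_e L f a b c : Xt3 L f a b c = / sqrt L * (a * Defs.d2 f a b c). Proof. reflexivity. Qed.
Lemma vals_e L u a b c :
  pbar u a b c = X1 u a b c / sqrt (X1 u a b c ^ 2 + X2 u a b c ^ 2) /\
  qbar u a b c = X2 u a b c / sqrt (X1 u a b c ^ 2 + X2 u a b c ^ 2) /\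
  ll u a b c = sqrt (X1 u a b c ^ 2 + X2 u a b c ^ 2) /\
  lL L u a b c = sqrt (X1 u a b c ^ 2 + X2 u a b c ^ 2 + (/ sqrt L * X3 u a b c) ^ 2) /\
  pbarL L u a b c = X1 u a b c / sqrt (X1 u a b c ^ 2 + X2 u a b c ^ 2 + (/ sqrt L * X3 u a b c) ^ 2) /\
  qbarL L u a b c = X2 u a b c / sqrt (X1 u a b c ^ 2 + X2 u a b c ^ 2 + (/ sqrt L * X3 u a b c) ^ 2) /\
  rbarL L u a b c = / sqrt L * X3 u a b c / sqrt (X1 u a b c ^ 2 + X2 u a b c ^ 2 + (/ sqrt L * X3 u a b c) ^ 2).
Proof. repeat split. Qed.

Lemma Hmean_F L alpha u x1 x2 x3 : 0 < L -> x1 <> 0 -> ll u x1 x2 x3 <> 0 -> lL L u x1 x2 x3 <> 0 ->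
  Hmean L alpha u x1 x2 x3 = FF x1 alpha (X1 u x1 x2 x3) (X2 u x1 x2 x3) (X3 u x1 x2 x3)
    (fun j => dcoord j (pbarL L u) x1 x2 x3) (fun j => dcoord j (qbarL L u) x1 x2 x3)
    (fun j => dcoord j (rbarL L u) x1 x2 x3) (/ sqrt L).
Proof.
intros HL Hx Hl HlL.
assert (Hs : sqrt L <> 0) by (apply Rgt_not_eq, sqrt_lt_R0; lra).
unfold Hmean, II, gL, nabla1, LC, P1, P1perp, e_, e1, e2, vL, Edir, sum3; cbv beta iota.
rewrite !Gamma_val by auto. unfold Gv.
rewrite ?X1_0, ?X2_0, ?Xt3_0, ?(X1_e (pbarL L u)), ?(X2_e (pbarL L u)), ?(Xt3_e L (pbarL L u)), ?(X1_e (qbarL L u)), ?(X2_e (qbarL L u)), ?(Xt3_e L (qbarL L u)), ?(X1_e (rbarL L u)), ?(X2_e (rbarL L u)), ?(Xt3_e L (rbarL L u)).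
destruct (vals_e L u x1 x2 x3) as [E1 [E2 [E3 [E4 [E5 [E6 E7]]]]]].
rewrite E4 in HlL. rewrite E3 in Hl.
rewrite E1, E2, E3, E4, E5, E6, E7.
unfold FF, e1F, e2F, V1, V2, V3, aF, bF, dF, pbF, qbF, PF, QF, RF, lamF, lF, dcoord.
generalize (Defs.d1 (pbarL L u) x1 x2 x3) (Defs.d2 (pbarL L u) x1 x2 x3) (Defs.d3 (pbarL L u) x1 x2 x3)
 (Defs.d1 (qbarL L u) x1 x2 x3) (Defs.d2 (qbarL L u) x1 x2 x3) (Defs.d3 (qbarL L u) x1 x2 x3)
 (Defs.d1 (rbarL L u) x1 x2 x3) (Defs.d2 (rbarL L u) x1 x2 x3) (Defs.d3 (rbarL L u) x1 x2 x3).
revert Hl HlL.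
generalize (X1 u x1 x2 x3) (X2 u x1 x2 x3) (X3 u x1 x2 x3) (sqrt L) Hs.
intros p q s c Hc.
generalize (sqrt (p ^ 2 + q ^ 2)) (sqrt (p ^ 2 + q ^ 2 + (/ c * s) ^ 2)).
intros l lam Hl Hlam. intros. field. auto.
Qed.

Definition DQ n dn p q s dp dq ds k :=
  (dn * sqrt (p^2+q^2+(k*s)^2) - n * ((2*p*dp + 2*q*dq + 2*(k*s)*(k*ds)) / (2*sqrt (p^2+q^2+(k*s)^2))))
   / (sqrt (p^2+q^2+(k*s)^2))^2.
Lemma isd_q (n f g h : R -> R) k t0 dn df dg dh :
 is_derive n t0 dn -> is_derive f t0 df -> is_derive g t0 dg -> is_derive h t0 dh ->
 0 < f t0^2+g t0^2+(k*h t0)^2 ->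
 is_derive (fun t => n t / sqrt (f t ^2 + g t^2 + (k*h t)^2)) t0 (DQ (n t0) dn (f t0) (g t0) (h t0) df dg dh k).
Proof.
intros Hn Hf Hg Hh Hpos.
assert (Hs: sqrt (f t0 ^2 + g t0^2 + (k*h t0)^2) <> 0) by (apply Rgt_not_eq, sqrt_lt_R0; lra).
replace (f t0 * (f t0 * 1) + g t0 * (g t0 * 1) + k * h t0 * (k * h t0 * 1)) with (f t0 ^2 + g t0^2 + (k*h t0)^2) by ring.
auto_derive.
- repeat split; try (eexists; eassumption); auto.
  replace (f t0 * (f t0 * 1) + g t0 * (g t0 * 1) + k * h t0 * (k * h t0 * 1)) with (f t0 ^2 + g t0^2 + (k*h t0)^2) by ring. auto.
- replace (f t0 * (f t0 * 1) + g t0 * (g t0 * 1) + k * h t0 * (k * h t0 * 1)) with (f t0 ^2 + g t0^2 + (k*h t0)^2) by ring.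
  replace (Derive (fun x => n x) t0) with dn by (symmetry; apply is_derive_unique; auto).
  replace (Derive (fun x => f x) t0) with df by (symmetry; apply is_derive_unique; auto).
  replace (Derive (fun x => g x) t0) with dg by (symmetry; apply is_derive_unique; auto).
  replace (Derive (fun x => h x) t0) with dh by (symmetry; apply is_derive_unique; auto).
  unfold DQ. field. auto.
Qed.

Definition DQ0 n dn p q dp dq :=
  (dn * sqrt (p^2+q^2) - n * ((2*p*dp + 2*q*dq) / (2*sqrt (p^2+q^2)))) / (sqrt (p^2+q^2))^2.
Lemma isd_q0 (n f g : R -> R) t0 dn df dg :
 is_derive n t0 dn -> is_derive f t0 df -> is_derive g t0 dg ->
 0 < f t0^2+g t0^2 ->
 is_derive (fun t => n t / sqrt (f t ^2 + g t^2)) t0 (DQ0 (n t0) dn (f t0) (g t0) df dg).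
Proof.
intros Hn Hf Hg Hpos.
assert (Hs: sqrt (f t0 ^2 + g t0^2) <> 0) by (apply Rgt_not_eq, sqrt_lt_R0; lra).
auto_derive.
- repeat split; try (eexists; eassumption); auto.
  replace (f t0 * (f t0 * 1) + g t0 * (g t0 * 1)) with (f t0 ^2 + g t0^2) by ring. auto.
- replace (f t0 * (f t0 * 1) + g t0 * (g t0 * 1)) with (f t0 ^2 + g t0^2) by ring.
  replace (Derive (fun x => n x) t0) with dn by (symmetry; apply is_derive_unique; auto).
  replace (Derive (fun x => f x) t0) with df by (symmetry; apply is_derive_unique; auto).
  replace (Derive (fun x => g x) t0) with dg by (symmetry; apply is_derive_unique; auto).
  unfold DQ0. field. auto.
Qed.

Definition line (j : idx) (f : fn3) (x1 x2 x3 : R) : R -> R :=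
  match j with i1 => fun t => f t x2 x3 | i2 => fun t => f x1 t x3 | i3 => fun t => f x1 x2 t end.
Definition pt (j : idx) (x1 x2 x3 : R) : R :=
  match j with i1 => x1 | i2 => x2 | i3 => x3 end.
Lemma dcoord_line j f x1 x2 x3 : dcoord j f x1 x2 x3 = Derive (line j f x1 x2 x3) (pt j x1 x2 x3).
Proof. destruct j; reflexivity. Qed.
Lemma line_pt j f x1 x2 x3 : line j f x1 x2 x3 (pt j x1 x2 x3) = f x1 x2 x3.
Proof. destruct j; reflexivity. Qed.

Section Der.
Variables (L : R) (u : fn3) (x1 x2 x3 : R) (j : idx).
Let f := line j (X1 u) x1 x2 x3.
Let g := line j (X2 u) x1 x2 x3.
Let h := line j (X3 u) x1 x2 x3.
Let t0 := pt j x1 x2 x3.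
Hypotheses (Ef : ex_derive f t0) (Eg : ex_derive g t0) (Eh : ex_derive h t0).

Lemma dP_val : 0 < X1 u x1 x2 x3 ^ 2 + X2 u x1 x2 x3 ^ 2 + (/ sqrt L * X3 u x1 x2 x3) ^ 2 ->
  dcoord j (pbarL L u) x1 x2 x3 = DQ (X1 u x1 x2 x3) (Derive f t0) (X1 u x1 x2 x3) (X2 u x1 x2 x3) (X3 u x1 x2 x3)
     (Derive f t0) (Derive g t0) (Derive h t0) (/ sqrt L).
Proof.
intros Hp. rewrite dcoord_line. apply is_derive_unique.
eapply is_derive_ext.
2: { pose proof (isd_q f f g h (/ sqrt L) t0 _ _ _ _ (Derive_correct _ _ Ef) (Derive_correct _ _ Ef) (Derive_correct _ _ Eg) (Derive_correct _ _ Eh)) as H.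
     unfold f, g, h, t0 in *. rewrite !line_pt in H. apply H. exact Hp. }
intros t. unfold f, g, h. destruct j; reflexivity.
Qed.

Lemma dQ_val : 0 < X1 u x1 x2 x3 ^ 2 + X2 u x1 x2 x3 ^ 2 + (/ sqrt L * X3 u x1 x2 x3) ^ 2 ->
  dcoord j (qbarL L u) x1 x2 x3 = DQ (X2 u x1 x2 x3) (Derive g t0) (X1 u x1 x2 x3) (X2 u x1 x2 x3) (X3 u x1 x2 x3)
     (Derive f t0) (Derive g t0) (Derive h t0) (/ sqrt L).
Proof.
intros Hp. rewrite dcoord_line. apply is_derive_unique.
eapply is_derive_ext.
2: { pose proof (isd_q g f g h (/ sqrt L) t0 _ _ _ _ (Derive_correct _ _ Eg) (Derive_correct _ _ Ef) (Derive_correct _ _ Eg) (Derive_correct _ _ Eh)) as H.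
     unfold f, g, h, t0 in *. rewrite !line_pt in H. apply H. exact Hp. }
intros t. unfold f, g, h. destruct j; reflexivity.
Qed.

Lemma dR_val : 0 < X1 u x1 x2 x3 ^ 2 + X2 u x1 x2 x3 ^ 2 + (/ sqrt L * X3 u x1 x2 x3) ^ 2 ->
  dcoord j (rbarL L u) x1 x2 x3 = DQ (/ sqrt L * X3 u x1 x2 x3) (/ sqrt L * Derive h t0) (X1 u x1 x2 x3) (X2 u x1 x2 x3) (X3 u x1 x2 x3)
     (Derive f t0) (Derive g t0) (Derive h t0) (/ sqrt L).
Proof.
intros Hp. rewrite dcoord_line. apply is_derive_unique.
eapply is_derive_ext.
2: { pose proof (isd_q (fun t => / sqrt L * h t) f g h (/ sqrt L) t0 _ _ _ _ (is_derive_scal _ _ _ _ (Derive_correct _ _ Eh)) (Derive_correct _ _ Ef) (Derive_correct _ _ Eg) (Derive_correct _ _ Eh)) as H.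
     unfold f, g, h, t0 in *. rewrite !line_pt in H. apply H. exact Hp. }
intros t. unfold f, g, h. destruct j; reflexivity.
Qed.

Lemma dpb_val : 0 < X1 u x1 x2 x3 ^ 2 + X2 u x1 x2 x3 ^ 2 ->
  dcoord j (pbar u) x1 x2 x3 = DQ0 (X1 u x1 x2 x3) (Derive f t0) (X1 u x1 x2 x3) (X2 u x1 x2 x3)
     (Derive f t0) (Derive g t0).
Proof.
intros Hp. rewrite dcoord_line. apply is_derive_unique.
eapply is_derive_ext.
2: { pose proof (isd_q0 f f g t0 _ _ _ (Derive_correct _ _ Ef) (Derive_correct _ _ Ef) (Derive_correct _ _ Eg)) as H.
     unfold f, g, t0 in *. rewrite !line_pt in H. apply H. exact Hp. }
intros t. unfold f, g. destruct j; reflexivity.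
Qed.

Lemma dqb_val : 0 < X1 u x1 x2 x3 ^ 2 + X2 u x1 x2 x3 ^ 2 ->
  dcoord j (qbar u) x1 x2 x3 = DQ0 (X2 u x1 x2 x3) (Derive g t0) (X1 u x1 x2 x3) (X2 u x1 x2 x3)
     (Derive f t0) (Derive g t0).
Proof.
intros Hp. rewrite dcoord_line. apply is_derive_unique.
eapply is_derive_ext.
2: { pose proof (isd_q0 g f g t0 _ _ _ (Derive_correct _ _ Eg) (Derive_correct _ _ Ef) (Derive_correct _ _ Eg)) as H.
     unfold f, g, t0 in *. rewrite !line_pt in H. apply H. exact Hp. }
intros t. unfold f, g. destruct j; reflexivity.
Qed.
End Der.

Definition Gk x1 alpha p q s (dp dq ds : idx -> R) k :=
 FF x1 alpha p q s (fun j => DQ p (dp j) p q s (dp j) (dq j) (ds j) k)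
   (fun j => DQ q (dq j) p q s (dp j) (dq j) (ds j) k)
   (fun j => DQ (k*s) (k*ds j) p q s (dp j) (dq j) (ds j) k) k.

Lemma Gk_cont x1 alpha p q s dp dq ds : 0 < p^2 + q^2 ->
  continuous (Gk x1 alpha p q s dp dq ds) 0.
Proof.
intros Hpq. apply (ex_derive_continuous (K:=R_AbsRing) (V:=R_NormedModule)).
unfold Gk, FF, e1F, e2F, V1, V2, V3, aF, bF, dF, pbF, qbF, PF, QF, RF, lamF, lF, DQ.
auto_derive.
replace (p * (p * 1) + q * (q * 1) + 0 * s * (0 * s * 1)) with (p^2+q^2) by ring.
replace (p * (p * 1) + q * (q * 1)) with (p^2+q^2) by ring.
assert (Hs : 0 < sqrt (p^2+q^2)) by (apply sqrt_lt_R0; lra).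
repeat split; try lra; try nra.
Qed.

Lemma Gk0 x1 alpha p q s dp dq ds : 0 < p^2 + q^2 ->
  Gk x1 alpha p q s dp dq ds 0 =
  x1 * DQ0 p (dp i1) p q (dp i1) (dq i1) + (x1 * DQ0 q (dq i2) p q (dp i2) (dq i2) + DQ0 q (dq i3) p q (dp i3) (dq i3))
  - (1 - alpha) * (p / sqrt (p^2+q^2)).
Proof.
intros Hpq.
unfold Gk, FF, e1F, e2F, V1, V2, V3, aF, bF, dF, pbF, qbF, PF, QF, RF, lamF, lF, DQ, DQ0.
replace (p ^ 2 + q ^ 2 + (0 * s) ^ 2) with (p^2+q^2) by ring.
assert (Hs : 0 < sqrt (p^2+q^2)) by (apply sqrt_lt_R0; lra).
assert (H2 : sqrt (p^2+q^2) ^ 2 = p^2+q^2) by (rewrite <- Rsqr_pow2; apply Rsqr_sqrt; lra).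
revert Hs H2. generalize (sqrt (p^2+q^2)). intros l Hl H2.
field_simplify_eq; [|lra]. replace (l^6) with (l^4 * l^2) by ring. rewrite H2. ring.
Qed.

Lemma FF_ext x1 alpha p q s dP dQ dR dP' dQ' dR' k :
  (forall j, dP j = dP' j) -> (forall j, dQ j = dQ' j) -> (forall j, dR j = dR' j) ->
  FF x1 alpha p q s dP dQ dR k = FF x1 alpha p q s dP' dQ' dR' k.
Proof. intros A B C. unfold FF, e1F, e2F, V1, V2, V3. rewrite !A, !B, !C. reflexivity. Qed.

Lemma ex_lines (u : fn3) x1 x2 x3 j :
  has_partials (dcoord i1 u) x1 x2 x3 -> has_partials (dcoord i2 u) x1 x2 x3 -> has_partials (dcoord i3 u) x1 x2 x3 ->
  ex_derive (line j (X1 u) x1 x2 x3) (pt j x1 x2 x3) /\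
  ex_derive (line j (X2 u) x1 x2 x3) (pt j x1 x2 x3) /\
  ex_derive (line j (X3 u) x1 x2 x3) (pt j x1 x2 x3).
Proof.
intros [A1 [A2 A3]] [B1 [B2 B3]] [C1 [C2 C3]]. simpl in *.
destruct j; simpl; unfold X1, X2, X3; repeat split; auto_derive; repeat split; auto.
Qed.

Lemma lim_invsqrt : is_lim (fun L => / sqrt L) p_infty 0.
Proof.
pose proof (is_lim_inv (fun L => sqrt L) p_infty p_infty (is_lim_sqrt_p (fun x => x) p_infty (is_lim_id p_infty))) as H.
simpl in H. apply H. discriminate.
Qed.

Theorem proposition2p16 (alpha : R) (u : fn3) (x1 x2 x3 : R) :
  regular_surface u ->
  Sigma u x1 x2 x3 ->
  ~ characteristic u x1 x2 x3 ->
  is_lim (fun L => Hmean L alpha u x1 x2 x3) p_infty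
    (X1 (pbar u) x1 x2 x3 + X2 (qbar u) x1 x2 x3 - (1 - alpha) * pbar u x1 x2 x3).
Proof.
intros [HC2 _] [HM _] Hnc.
unfold inM in HM.
destruct (HC2 x1 x2 x3 HM) as [_ [_ [Hdk _]]].
assert (Hex : forall j, ex_derive (line j (X1 u) x1 x2 x3) (pt j x1 x2 x3) /\
  ex_derive (line j (X2 u) x1 x2 x3) (pt j x1 x2 x3) /\
  ex_derive (line j (X3 u) x1 x2 x3) (pt j x1 x2 x3)).
{ intros j. apply ex_lines; apply Hdk. }
assert (Hpq : 0 < X1 u x1 x2 x3 ^ 2 + X2 u x1 x2 x3 ^ 2).
{ unfold characteristic in Hnc.
  destruct (Req_dec (X1 u x1 x2 x3) 0); destruct (Req_dec (X2 u x1 x2 x3) 0); try tauto; nra. }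
set (dp := fun j => Derive (line j (X1 u) x1 x2 x3) (pt j x1 x2 x3)).
set (dq := fun j => Derive (line j (X2 u) x1 x2 x3) (pt j x1 x2 x3)).
set (ds := fun j => Derive (line j (X3 u) x1 x2 x3) (pt j x1 x2 x3)).
assert (Key : forall L, 0 < L -> Gk x1 alpha (X1 u x1 x2 x3) (X2 u x1 x2 x3) (X3 u x1 x2 x3) dp dq ds (/ sqrt L)
   = Hmean L alpha u x1 x2 x3).
{ intros L HL.
  assert (HpL : 0 < X1 u x1 x2 x3 ^ 2 + X2 u x1 x2 x3 ^ 2 + (/ sqrt L * X3 u x1 x2 x3) ^ 2) by nra.
  rewrite Hmean_F; auto.
  2: lra.
  2: { unfold ll, pp, qq. apply Rgt_not_eq, sqrt_lt_R0; lra. }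
  2: { unfold lL, pp, qq, rr, Xt3. apply Rgt_not_eq, sqrt_lt_R0; lra. }
  unfold Gk. apply FF_ext; intros j; destruct (Hex j) as [Ef [Eg Eh]].
  - rewrite (dP_val L u x1 x2 x3 j Ef Eg Eh HpL). reflexivity.
  - rewrite (dQ_val L u x1 x2 x3 j Ef Eg Eh HpL). reflexivity.
  - rewrite (dR_val L u x1 x2 x3 j Ef Eg Eh HpL). reflexivity. }
assert (Tgt : X1 (pbar u) x1 x2 x3 + X2 (qbar u) x1 x2 x3 - (1 - alpha) * pbar u x1 x2 x3
  = Gk x1 alpha (X1 u x1 x2 x3) (X2 u x1 x2 x3) (X3 u x1 x2 x3) dp dq ds 0).
{ rewrite Gk0 by exact Hpq. rewrite X1_e, X2_e.
  change (Defs.d1 (pbar u) x1 x2 x3) with (dcoord i1 (pbar u) x1 x2 x3).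
  change (Defs.d2 (qbar u) x1 x2 x3) with (dcoord i2 (qbar u) x1 x2 x3).
  change (Defs.d3 (qbar u) x1 x2 x3) with (dcoord i3 (qbar u) x1 x2 x3).
  destruct (Hex i1) as [Ef1 [Eg1 Eh1]]. destruct (Hex i2) as [Ef2 [Eg2 Eh2]]. destruct (Hex i3) as [Ef3 [Eg3 Eh3]].
  rewrite (dpb_val u x1 x2 x3 i1 Ef1 Eg1 Eh1 Hpq), (dqb_val u x1 x2 x3 i2 Ef2 Eg2 Eh2 Hpq), (dqb_val u x1 x2 x3 i3 Ef3 Eg3 Eh3 Hpq).
  destruct (vals_e 1 u x1 x2 x3) as [E1 _]. rewrite E1. reflexivity. }
rewrite Tgt.
apply is_lim_ext_loc with (f := fun L => Gk x1 alpha (X1 u x1 x2 x3) (X2 u x1 x2 x3) (X3 u x1 x2 x3) dp dq ds (/ sqrt L)).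
- exists 0. intros L HL. apply Key. exact HL.
- unfold is_lim. eapply filterlim_comp.
  + apply lim_invsqrt.
  + apply Gk_cont. exact Hpq.
Qed.
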